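(* Let $X$ be a space, let $Y$ be an extension of $X$ with compact remainder, let $\zeta Y$ be a compactification of $Y$, and let $\phi:\beta X\to\zeta Y$ be the continuous extension of the identity of $X$. Then $Y$ is pseudocompact (i.e. $Y\in\mathscr{U}(X)$) if and only if $\mathrm{cl}_{\beta X}(\beta X\setminus\upsilon X)\subseteq\phi^{-1}[Y\setminus X]$.
   Context: All spaces are completely regular Hausdorff. $\beta X$ is the Stone–Čech compactification and $\upsilon X\subseteq\beta X$ the Hewitt realcompactification of $X$. An extension of $X$ is a space containing $X$ as a dense subspace; its remainder is $Y\setminus X$. A space is pseudocompact if every continuous real-valued function on it is bounded. $\mathscr{U}(X)$ is the set of pseudocompact extensions of $X$ with compact remainder. *)

(* Defs.v *)
From Stdlib Require Import Reals List Classical.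
Open Scope R_scope.

Record Top := {
  pt :> Type;
  open : (pt -> Prop) -> Prop;
  open_full : open (fun _ => True);
  open_inter : forall U V, open U -> open V -> open (fun x => U x /\ V x);
  open_union : forall (I : Type) (F : I -> pt -> Prop),
      (forall i, open (F i)) -> open (fun x => exists i, F i x)
}.
Arguments open {t}.

Definition closure {S : Top} (A : S -> Prop) (x : S) : Prop :=
  forall U, open U -> U x -> exists y, U y /\ A y.

Definition dense {S : Top} (A : S -> Prop) : Prop :=
  forall U, open U -> (exists y, U y) -> exists y, U y /\ A y.

Definition hausdorff (S : Top) : Prop :=
  forall x y : S, x <> y -> exists U V, open U /\ open V /\ U x /\ V y /\
    (forall z, ~ (U z /\ V z)).

Definition compact_set {S : Top} (A : S -> Prop) : Prop :=
  forall (I : Type) (F : I -> S -> Prop), (forall i, open (F i)) ->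
    (forall y, A y -> exists i, F i y) ->
    exists l : list I, forall y, A y -> exists i, In i l /\ F i y.

Definition compact (S : Top) : Prop := @compact_set S (fun _ => True).

Definition continuous {S T : Top} (f : S -> T) : Prop :=
  forall V, open V -> open (fun x => V (f x)).

Definition continuous_on_R {S : Top} (A : S -> Prop) (f : S -> R) : Prop :=
  forall x, A x -> forall eps, eps > 0 ->
    exists U, open U /\ U x /\ forall y, U y -> A y -> Rabs (f y - f x) < eps.

Definition continuous_R {S : Top} (f : S -> R) : Prop :=
  continuous_on_R (fun _ => True) f.

Definition closed {S : Top} (F : S -> Prop) : Prop := open (fun x => ~ F x).

Definition tychonoff (S : Top) : Prop :=
  hausdorff S /\
  forall (F : S -> Prop) (x : S), closed F -> ~ F x ->
    exists f : S -> R, continuous_R f /\ f x = 0 /\ forall y, F y -> f y = 1.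

Definition continuous_on {S T : Top} (A : S -> Prop) (f : S -> T) : Prop :=
  forall V, open V -> exists U, open U /\ forall x, A x -> (V (f x) <-> U x).

Definition embedding_on {S T : Top} (A : S -> Prop) (e : S -> T) : Prop :=
  (forall x y, A x -> A y -> e x = e y -> x = y) /\
  continuous_on A e /\
  (forall U, open U -> exists V, open V /\ forall x, A x -> (U x <-> V (e x))).

Definition compactification_of {S : Top} (A : S -> Prop) (B : Top) (e : S -> B) : Prop :=
  compact B /\ hausdorff B /\ embedding_on A e /\
  dense (fun b => exists x, A x /\ b = e x).

Definition stone_cech_of {S : Top} (A : S -> Prop) (B : Top) (e : S -> B) : Prop :=
  compactification_of A B e /\
  forall (K : Top) (f : S -> K), compact K -> hausdorff K -> continuous_on A f ->
    exists g : B -> K, continuous g /\ forall x, A x -> g (e x) = f x.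

(* Hewitt realcompactification of the subspace A of S, as a subset of its
   Stone-Cech compactification (B, e): the points p of B such that every
   f in C(A) extends continuously to A \cup {p}. *)
Definition hewitt_in {S : Top} (A : S -> Prop) (B : Top) (e : S -> B) (p : B) : Prop :=
  forall f : S -> R, continuous_on_R A f ->
    exists g : B -> R,
      continuous_on_R (fun b => b = p \/ exists x, A x /\ b = e x) g /\
      forall x, A x -> g (e x) = f x.

Definition pseudocompact (S : Top) : Prop :=
  forall f : S -> R, continuous_R f -> exists M, forall y, Rabs (f y) <= M.

(* Main.v *)
Require Import Defs.
From Stdlib Require Import Reals List Classical.
From Stdlib Require Import Lra FunctionalExtensionality PropExtensionality ClassicalEpsilon ProofIrrelevance.
Open Scope R_scope.


Lemma open_ext {S : Top} (U V : S -> Prop) :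
  (forall x, U x <-> V x) -> open U -> open V.
Proof.
  intros H HU. assert (E : U = V).
  { apply functional_extensionality; intro x; apply propositional_extensionality; apply H. }
  now rewrite <- E.
Qed.

Lemma open_local {S : Top} (P : S -> Prop) :
  (forall x, P x -> exists U, open U /\ U x /\ forall y, U y -> P y) -> open P.
Proof.
  intro H.
  pose (I := {U : S -> Prop | open U /\ forall y, U y -> P y}).
  apply (open_ext (fun x => exists i : I, proj1_sig i x)).
  - intro x; split.
    + intros [i Hx]; destruct i as [U [HU1 HU2]]; simpl in Hx; apply HU2; exact Hx.
    + intro Px. destruct (H x Px) as [U [HU [Ux HUP]]].
      exists (exist _ U (conj HU HUP)); exact Ux.
  - apply open_union. intro i; exact (proj1 (proj2_sig i)).
Qed.

Lemma open_finite_inter {S : Top} {I : Type} (l : list I) (P : I -> S -> Prop) :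
  (forall i, In i l -> open (P i)) -> open (fun z => forall i, In i l -> P i z).
Proof.
  induction l as [|a l IH]; intro H.
  - apply (open_ext (fun _ => True)); [| apply open_full].
    intro x; split; [intros _ i []| auto].
  - apply (open_ext (fun z => P a z /\ (forall i, In i l -> P i z))).
    + intro z; split.
      * intros [H1 H2] i [<-|Hi]; auto.
      * intro H1; split; [apply H1; left; auto | intros i Hi; apply H1; right; auto].
    + apply open_inter; [apply H; left; auto|]. apply IH; intros i Hi; apply H; right; auto.
Qed.

Lemma open_finite_union {S : Top} {I : Type} (l : list I) (P : I -> S -> Prop) :
  (forall i, open (P i)) -> open (fun z => exists i, In i l /\ P i z).
Proof.
  intro H.
  apply (open_ext (fun z => exists i : {i | In i l}, P (proj1_sig i) z)).
  - intro z; split.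
    + intros [[i Hi] Hz]; eauto.
    + intros [i [Hi Hz]]; exists (exist _ i Hi); auto.
  - apply open_union; intros [i Hi]; apply H.
Qed.

Lemma sep_compact {Y T : Top} (A : Y -> Prop) (k : Y -> T) (t : T) :
  hausdorff T -> continuous k -> compact_set A ->
  (forall y, A y -> k y <> t) ->
  exists U V, open U /\ open V /\ U t /\ (forall y, A y -> V (k y)) /\
    (forall z, ~ (U z /\ V z)).
Proof.
  intros HT Hk HA Hne.
  pose (I := {q : (T -> Prop) * (T -> Prop) | open (fst q) /\ open (snd q) /\ fst q t /\
               forall z, ~ (fst q z /\ snd q z)}).
  destruct (HA I (fun i y => snd (proj1_sig i) (k y))) as [l Hl].
  - intro i; apply Hk; exact (proj1 (proj2 (proj2_sig i))).
  - intros y Ay. assert (Hn : t <> k y) by (intro E; apply (Hne y Ay); auto).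
    destruct (HT _ _ Hn) as [U [V [HU [HV [Ut [Vy Hd]]]]]].
    exists (exist _ (U, V) (conj HU (conj HV (conj Ut Hd)))); simpl; exact Vy.
  - exists (fun z => forall i, In i l -> fst (proj1_sig i) z).
    exists (fun z => exists i, In i l /\ snd (proj1_sig i) z).
    split; [| split; [| split; [| split]]].
    + apply open_finite_inter. intros i _; exact (proj1 (proj2_sig i)).
    + apply open_finite_union. intro i; exact (proj1 (proj2 (proj2_sig i))).
    + intros i _; exact (proj1 (proj2 (proj2 (proj2_sig i)))).
    + intros y Ay. destruct (Hl y Ay) as [i [Hi Hy]]; eauto.
    + intros z [H1 [i [Hi H2]]].
      apply (proj2 (proj2 (proj2 (proj2_sig i))) z); split; auto.
Qed.

Lemma embed_cont {S T : Top} (e : S -> T) :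
  embedding_on (fun _ => True) e -> continuous e.
Proof.
  intros [_ [Hc _]] V HV. destruct (Hc V HV) as [U [HU HUV]].
  apply (open_ext U); auto. intro x; symmetry; apply HUV; auto.
Qed.

Lemma id_cont {S : Top} : continuous (fun x : S => x).
Proof. intros V HV; exact HV. Qed.

Lemma fold_max_ge {I : Type} (N : I -> R) (l : list I) i :
  In i l -> N i <= fold_right (fun i acc => Rmax (N i) acc) 0 l.
Proof.
  induction l as [|a l IH]; simpl; [tauto|].
  intros [<-|Hi]; [apply Rmax_l|]. eapply Rle_trans; [apply IH; auto| apply Rmax_r].
Qed.


Lemma cont_compose {S : Top} (A : S -> Prop) (f : S -> R) (g : R -> R) :
  continuous_on_R A f ->
  (forall a0 eps, eps > 0 -> exists d, d > 0 /\ forall a, Rabs (a - a0) < d -> Rabs (g a - g a0) < eps) ->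
  continuous_on_R A (fun x => g (f x)).
Proof.
  intros Hf Hg x Ax eps Heps.
  destruct (Hg (f x) eps Heps) as [d [Hd Hd']].
  destruct (Hf x Ax d Hd) as [U [HU [Ux HUf]]].
  exists U; repeat split; auto.
Qed.

Lemma cont_binop {S : Top} (A : S -> Prop) (f g : S -> R) (op : R -> R -> R) :
  (forall a0 b0 eps, eps > 0 -> exists d, d > 0 /\ forall a b,
      Rabs (a - a0) < d -> Rabs (b - b0) < d -> Rabs (op a b - op a0 b0) < eps) ->
  continuous_on_R A f -> continuous_on_R A g -> continuous_on_R A (fun x => op (f x) (g x)).
Proof.
  intros Hop Hf Hg x Ax eps Heps.
  destruct (Hop (f x) (g x) eps Heps) as [d [Hd Hd']].
  destruct (Hf x Ax d Hd) as [U [HU [Ux HUf]]].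
  destruct (Hg x Ax d Hd) as [V [HV [Vx HVg]]].
  exists (fun y => U y /\ V y); split; [apply open_inter; auto|].
  split; [auto|]. intros y [Uy Vy] Ay. apply Hd'; auto.
Qed.

Lemma cont_const {S : Top} (A : S -> Prop) (c : R) : continuous_on_R A (fun _ => c).
Proof.
  intros x _ eps Heps. exists (fun _ => True); split; [apply open_full|]. split; auto.
  intros; rewrite Rminus_diag, Rabs_R0; lra.
Qed.

Lemma cont_weaken {S : Top} (A B : S -> Prop) (f : S -> R) :
  (forall x, B x -> A x) -> continuous_on_R A f -> continuous_on_R B f.
Proof.
  intros HBA Hf x Bx eps Heps. destruct (Hf x (HBA x Bx) eps Heps) as [U [HU [Ux H]]].
  exists U; repeat split; auto.
Qed.

Lemma min_pt : forall a0 b0 eps, eps > 0 -> exists d, d > 0 /\ forall a b,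
      Rabs (a - a0) < d -> Rabs (b - b0) < d -> Rabs (Rmin a b - Rmin a0 b0) < eps.
Proof.
  intros a0 b0 eps He; exists eps; split; auto. intros a b H1 H2.
  unfold Rmin; destruct (Rle_dec a b); destruct (Rle_dec a0 b0);
  revert H1 H2; split_Rabs; lra.
Qed.

Lemma mult_pt : forall a0 b0 eps, eps > 0 -> exists d, d > 0 /\ forall a b,
      Rabs (a - a0) < d -> Rabs (b - b0) < d -> Rabs (a * b - a0 * b0) < eps.
Proof.
  intros a0 b0 eps He.
  set (K := Rabs a0 + Rabs b0 + 1).
  assert (HK : K > 0) by (unfold K; pose proof (Rabs_pos a0); pose proof (Rabs_pos b0); lra).
  exists (Rmin 1 (eps / (2 * K))). split.
  - apply Rmin_pos; [lra| apply Rdiv_lt_0_compat; lra].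
  - intros a b H1 H2.
    assert (Hd1 : Rmin 1 (eps / (2 * K)) <= 1) by apply Rmin_l.
    assert (Hd2 : Rmin 1 (eps / (2 * K)) <= eps / (2 * K)) by apply Rmin_r.
    set (d := Rmin 1 (eps / (2 * K))) in *.
    replace (a * b - a0 * b0) with ((a - a0) * b + a0 * (b - b0)) by ring.
    eapply Rle_lt_trans; [apply Rabs_triang|].
    rewrite !Rabs_mult.
    assert (Hb : Rabs b <= Rabs b0 + 1).
    { replace b with ((b - b0) + b0) by ring. eapply Rle_trans; [apply Rabs_triang|]. lra. }
    assert (Ha1 : Rabs (a - a0) * Rabs b <= d * (Rabs b0 + 1)).
    { apply Rmult_le_compat; try apply Rabs_pos; lra. }
    assert (Ha2 : Rabs a0 * Rabs (b - b0) <= Rabs a0 * d).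
    { apply Rmult_le_compat_l; [apply Rabs_pos| lra]. }
    assert (Hdk : d * K <= eps / 2).
    { apply Rle_trans with (eps / (2 * K) * K).
      - apply Rmult_le_compat_r; lra.
      - right; field; lra. }
    unfold K in Hdk.
    assert (d > 0) by (unfold d; apply Rmin_pos; [lra| apply Rdiv_lt_0_compat; lra]).
    nra.
Qed.

Lemma clamp_pt : forall a0 eps, eps > 0 -> exists d, d > 0 /\ forall a,
      Rabs (a - a0) < d -> Rabs (Rmax 0 (2 * a - 1) - Rmax 0 (2 * a0 - 1)) < eps.
Proof.
  intros a0 eps He; exists (eps / 2); split; [lra|]. intros a H.
  unfold Rmax; destruct (Rle_dec 0 (2 * a - 1)); destruct (Rle_dec 0 (2 * a0 - 1));
  revert H; split_Rabs; lra.
Qed.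


Lemma interval_compact (a b : R) (I : Type) (G : I -> R -> Prop) :
  (forall t, a <= t <= b -> exists i, G i t) ->
  (forall i t, a <= t <= b -> G i t -> exists d, d > 0 /\
     forall s, a <= s <= b -> Rabs (s - t) < d -> G i s) ->
  exists l, forall t, a <= t <= b -> exists i, In i l /\ G i t.
Proof.
  intros Hcov Hop.
  destruct (Rle_dec a b) as [Hab|Hab]; [| exists nil; intros t Ht; lra].
  pose (E := fun x => a <= x <= b /\ exists l : list I,
                forall t, a <= t <= x -> exists i, In i l /\ G i t).
  assert (Ea : E a).
  { split; [lra|]. destruct (Hcov a) as [i Hi]; [lra|].
    exists (i :: nil). intros t Ht. replace t with a by lra. exists i; split; [left|]; auto. }
  assert (Hb : bound E) by (exists b; intros x [Hx _]; lra).
  destruct (completeness E Hb (ex_intro _ a Ea)) as [c [Hub Hlub]].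
  assert (Hac : a <= c) by (apply Hub; exact Ea).
  assert (Hcb : c <= b) by (apply Hlub; intros x [Hx _]; lra).
  destruct (Hcov c) as [i Hi]; [lra|].
  destruct (Hop i c (conj Hac Hcb) Hi) as [d [Hd Hd']].
  assert (Hx : exists x, E x /\ c - d < x).
  { apply NNPP; intro Hn.
    assert (c <= c - d); [|lra].
    apply Hlub. intros x Ex. apply Rnot_lt_le. intro Hlt. apply Hn; eauto. }
  destruct Hx as [x [[Hx [l Hl]] Hxc]].
  assert (Hxle : x <= c) by (apply Hub; split; [exact Hx| exists l; exact Hl]).
  set (y := Rmin b (c + d / 2)).
  assert (Ey : E y).
  { split; [unfold y; split; [apply Rmin_case; lra| apply Rmin_l]|].
    exists (i :: l). intros t Ht.
    destruct (Rle_dec t x) as [Htx|Htx].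
    - destruct (Hl t) as [i' [Hi' Hg]]; [lra|]. exists i'; split; [right|]; auto.
    - exists i; split; [left; auto|]. apply Hd'.
      + split; [lra|]. destruct Ht as [_ Ht]. unfold y in Ht.
        eapply Rle_trans; [exact Ht| apply Rmin_l].
      + assert (t <= c + d / 2) by (eapply Rle_trans; [apply Ht| apply Rmin_r]).
        split_Rabs; lra. }
  assert (Hyc : y <= c) by (apply Hub; exact Ey).
  assert (Hyb : y = b).
  { unfold y in *. revert Hyc. apply Rmin_case_strong; intros; lra. }
  destruct Ey as [_ [l' Hl']]. exists l'. intros t Ht. apply Hl'. rewrite <- Hyb in Ht. exact Ht.
Qed.

Definition Kpt (M : R) := {r : R | -M <= r <= M}.
Definition Kopen (M : R) (U : Kpt M -> Prop) : Prop :=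
  forall r, U r -> exists d, d > 0 /\ forall s : Kpt M, Rabs (proj1_sig s - proj1_sig r) < d -> U s.

Lemma Kopen_full (M : R) : Kopen M (fun _ => True).
Proof. intros r _. exists 1; split; auto; lra. Qed.

Lemma Kopen_inter (M : R) U V : Kopen M U -> Kopen M V -> Kopen M (fun x => U x /\ V x).
Proof.
  intros HU HV r [Ur Vr].
  destruct (HU r Ur) as [d1 [Hd1 H1]]. destruct (HV r Vr) as [d2 [Hd2 H2]].
  exists (Rmin d1 d2); split; [apply Rmin_pos; auto|].
  intros s Hs; split; [apply H1 | apply H2]; eapply Rlt_le_trans; eauto; [apply Rmin_l|apply Rmin_r].
Qed.

Lemma Kopen_union (M : R) (I : Type) (F : I -> Kpt M -> Prop) :
  (forall i, Kopen M (F i)) -> Kopen M (fun x => exists i, F i x).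
Proof.
  intros H r [i Hi]. destruct (H i r Hi) as [d [Hd H']]. exists d; split; auto.
  intros s Hs; exists i; auto.
Qed.

Definition KTop (M : R) : Top :=
  {| pt := Kpt M; open := Kopen M; open_full := Kopen_full M;
     open_inter := Kopen_inter M; open_union := Kopen_union M |}.

Lemma KTop_hausdorff M : hausdorff (KTop M).
Proof.
  intros x y Hxy.
  assert (Hne : proj1_sig x <> proj1_sig y).
  { intro E. apply Hxy. destruct x, y; simpl in E; subst. f_equal; apply proof_irrelevance. }
  set (d := Rabs (proj1_sig x - proj1_sig y) / 2).
  assert (Hd : d > 0).
  { unfold d. assert (Rabs (proj1_sig x - proj1_sig y) > 0); [|lra].
    apply Rabs_pos_lt. intro E; apply Hne; lra. }
  exists (fun z : Kpt M => Rabs (proj1_sig z - proj1_sig x) < d).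
  exists (fun z : Kpt M => Rabs (proj1_sig z - proj1_sig y) < d).
  split; [|split; [|split; [|split]]].
  - intros r Hr. exists (d - Rabs (proj1_sig r - proj1_sig x)); split; [lra|].
    intros s Hs. revert Hr Hs; split_Rabs; lra.
  - intros r Hr. exists (d - Rabs (proj1_sig r - proj1_sig y)); split; [lra|].
    intros s Hs. revert Hr Hs; split_Rabs; lra.
  - simpl. rewrite Rminus_diag, Rabs_R0; lra.
  - simpl. rewrite Rminus_diag, Rabs_R0; lra.
  - intros z [H1 H2]. unfold d in *. revert H1 H2; split_Rabs; lra.
Qed.

Lemma KTop_compact M : Defs.compact (KTop M).
Proof.
  intros I F HF Hcov.
  destruct (interval_compact (-M) M I (fun i t => exists H : -M <= t <= M, F i (exist _ t H)))
    as [l Hl].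
  - intros t Ht. destruct (Hcov (exist _ t Ht) Logic.I) as [i Hi]. exists i, Ht; exact Hi.
  - intros i t Ht [H Hi]. destruct (HF i _ Hi) as [d [Hd Hd']].
    exists d; split; auto. intros s Hs Hst. exists Hs. apply Hd'. simpl. exact Hst.
  - exists l. intros [t Ht] _. destruct (Hl t Ht) as [i [Hi [H' HF']]].
    exists i; split; auto. replace Ht with H' by apply proof_irrelevance. exact HF'.
Qed.


Lemma patch {Y bX : Top} (X : Y -> Prop) (e : Y -> bX) (p : bX) (U : bX -> Prop)
  (g0 : bX -> R) (f : Y -> R) :
  hausdorff bX -> embedding_on X e -> open U -> U p -> continuous_R g0 ->
  continuous_on_R X f -> (forall x, X x -> U (e x) -> g0 (e x) = f x) ->
  exists g : bX -> R,
    continuous_on_R (fun b => b = p \/ exists x, X x /\ b = e x) g /\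
    forall x, X x -> g (e x) = f x.
Proof.
  intros HH [Hinj [_ Hemb]] HU Up Hg0 Hf Hagree.
  pose (G := fun b => match excluded_middle_informative (U b) with
                      | left _ => g0 b
                      | right _ => match excluded_middle_informative (exists x, X x /\ b = e x) with
                                   | left H => f (proj1_sig (constructive_indefinite_description _ H))
                                   | right _ => 0 end end).
  assert (GU : forall b, U b -> G b = g0 b).
  { intros b Ub; unfold G; destruct (excluded_middle_informative (U b)); tauto. }
  assert (GX : forall x, X x -> G (e x) = f x).
  { intros x Xx; unfold G; destruct (excluded_middle_informative (U (e x))) as [Ue|Ue].
    - apply Hagree; auto.
    - destruct (excluded_middle_informative (exists x0, X x0 /\ e x = e x0)) as [H|H].
      + destruct (constructive_indefinite_description _ H) as [x' [Xx' Ex']]; simpl.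
        f_equal. symmetry; apply Hinj; auto.
      + exfalso; apply H; eauto. }
  exists G; split; [|exact GX].
  intros b Db eps Heps.
  destruct (classic (U b)) as [Ub|Ub].
  - destruct (Hg0 b Logic.I eps Heps) as [U1 [HU1 [U1b H1]]].
    exists (fun c => U c /\ U1 c); split; [apply open_inter; auto|]. split; [auto|].
    intros c [Uc U1c] _. rewrite (GU c Uc), (GU b Ub). apply H1; auto.
  - assert (Hbp : b <> p) by (intro E; subst; tauto).
    destruct Db as [Db|[x [Xx Ebx]]]; [tauto|]. subst b.
    destruct (HH _ _ Hbp) as [Ub' [Vp [HUb' [HVp [Ub'b [Vpp Hd]]]]]].
    destruct (Hf x Xx eps Heps) as [U2 [HU2 [U2x H2]]].
    destruct (Hemb U2 HU2) as [V2 [HV2 HV2e]].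
    exists (fun c => Ub' c /\ V2 c); split; [apply open_inter; auto|].
    split; [split; auto; apply HV2e; auto|].
    intros c [Ub'c V2c] [Dc|[x' [Xx' Ec]]].
    + subst c. exfalso; apply (Hd p); auto.
    + subst c. rewrite (GX x' Xx'), (GX x Xx). apply H2; auto. apply HV2e; auto.
Qed.


Lemma bnd_between r M : Rabs r <= M -> -M <= r <= M.
Proof. split_Rabs; lra. Qed.

Definition fmin {S : Top} {I : Type} (l : list I) (g : I -> S -> R) (z : S) : R :=
  fold_right (fun i acc => Rmin (g i z) acc) 1 l.

Lemma fmin_cont {S : Top} {I : Type} (l : list I) (g : I -> S -> R) :
  (forall i, continuous_R (g i)) -> continuous_R (fmin l g).
Proof.
  intro H; induction l as [|a l IH]; unfold fmin; simpl.
  - apply cont_const.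
  - exact (cont_binop _ (g a) (fmin l g) Rmin min_pt (H a) IH).
Qed.

Lemma fmin_one {S : Top} {I : Type} (l : list I) (g : I -> S -> R) z :
  (forall i, g i z = 1) -> fmin l g z = 1.
Proof.
  intro H; induction l as [|a l IH]; unfold fmin in *; simpl; auto.
  rewrite IH, H. apply Rmin_left; lra.
Qed.

Lemma fmin_le {S : Top} {I : Type} (l : list I) (g : I -> S -> R) i z :
  In i l -> fmin l g z <= g i z.
Proof.
  induction l as [|a l IH]; unfold fmin in *; simpl; [tauto|].
  intros [<-|Hi]; [apply Rmin_l|]. eapply Rle_trans; [apply Rmin_r| auto].
Qed.

Lemma main_hewitt (Y : Top) (X : Y -> Prop) (bX : Top) (e : Y -> bX)
  (Z : Top) (j : Y -> Z) (phi : bX -> Z) :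
  tychonoff Y -> compact_set (fun y => ~ X y) -> stone_cech_of X bX e ->
  continuous j -> continuous phi -> (forall x, X x -> phi (e x) = j x) ->
  pseudocompact Y ->
  forall (W W' : Z -> Prop), open W -> open W' -> (forall z, ~ (W z /\ W' z)) ->
  (forall y, ~ X y -> W' (j y)) ->
  forall c, W (phi c) -> hewitt_in X bX e c.
Proof.
  intros [HHY HTY] HK [[_ [HHbX [Hemb _]]] HSC] Hj Hphi Hphij Hpc W W' HW HW' HWW' HjW c Wc.
  intros f Hf.
  assert (HXo : forall x, X x -> exists U0, open U0 /\ U0 x /\ forall z, U0 z -> X z).
  { intros x Xx.
    destruct (sep_compact (fun y => ~ X y) (fun y => y) x HHY id_cont HK) as
      [U [V [HU [HV [Ux [HV' Hd]]]]]].
    - intros y Hy E; subst; tauto.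
    - exists U; repeat split; auto. intros z Uz. apply NNPP; intro Hz.
      apply (Hd z); split; auto. }
  pose (C := fun z => ~ W' (j z)).
  assert (HC : closed C).
  { unfold closed. apply (open_ext (fun z => W' (j z))); [|apply Hj; exact HW'].
    intro z; unfold C; split; [tauto| apply NNPP]. }
  pose (I := {q : Y * (Y -> R) | ~ X (fst q) /\ continuous_R (snd q) /\ snd q (fst q) = 0 /\
                                 forall z, C z -> snd q z = 1}).
  destruct (HK I (fun i z => snd (proj1_sig i) z < 1/2)) as [l Hl].
  - intro i. apply open_local. intros z Hz.
    assert (Hpos : 1/2 - snd (proj1_sig i) z > 0) by lra.
    destruct (proj1 (proj2 (proj2_sig i)) z Logic.I _ Hpos) as [U [HU [Uz HUf]]].
    exists U; repeat split; auto. intros y Uy. specialize (HUf y Uy Logic.I).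
    revert HUf; split_Rabs; lra.
  - intros y Hy.
    destruct (HTY C y HC) as [fy [Hfy [Hfy0 Hfy1]]].
    { unfold C; intro H; apply H; apply HjW; auto. }
    exists (exist _ (y, fy) (conj Hy (conj Hfy (conj Hfy0 Hfy1)))); simpl. lra.
  - pose (gi := fun (i : I) z => snd (proj1_sig i) z).
    pose (m := fmin l gi).
    assert (Hm : continuous_R m).
    { apply fmin_cont. intro i; exact (proj1 (proj2 (proj2_sig i))). }
    assert (HmC : forall z, C z -> m z = 1).
    { intros z Cz; apply fmin_one. intro i; exact (proj2 (proj2 (proj2 (proj2_sig i))) z Cz). }
    assert (Hmle : forall i z, In i l -> m z <= snd (proj1_sig i) z).
    { intros i z Hi; exact (fmin_le l gi i z Hi). }
    pose (h := fun z => Rmax 0 (2 * m z - 1)).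
    assert (Hh : continuous_R h) by exact (cont_compose _ m (fun a => Rmax 0 (2 * a - 1)) Hm clamp_pt).
    assert (HhC : forall z, C z -> h z = 1).
    { intros z Cz; unfold h; rewrite HmC; auto. rewrite Rmax_right; lra. }
    assert (Hh0 : forall y, ~ X y -> exists U, open U /\ U y /\ forall z, U z -> h z = 0).
    { intros y Hy. destruct (Hl y Hy) as [i [Hi Hiy]].
      assert (Hpos : 1/2 - snd (proj1_sig i) y > 0) by lra.
      destruct (proj1 (proj2 (proj2_sig i)) y Logic.I _ Hpos) as [U [HU [Uy HUf]]].
      exists U; repeat split; auto. intros z Uz. specialize (HUf z Uz Logic.I).
      assert (snd (proj1_sig i) z < 1/2) by (revert HUf; split_Rabs; lra).
      pose proof (Hmle i z Hi). unfold h. apply Rmax_left. lra. }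
    pose (F := fun z => f z * h z).
    assert (HF : continuous_R F).
    { intros y _ eps Heps. destruct (classic (X y)) as [Xy|Xy].
      - destruct (HXo y Xy) as [U0 [HU0 [U0y HU0X]]].
        destruct (cont_binop X f h Rmult mult_pt Hf (cont_weaken _ _ h (fun _ _ => Logic.I) Hh)
                   y Xy eps Heps) as [U1 [HU1 [U1y H1]]].
        exists (fun z => U0 z /\ U1 z); split; [apply open_inter; auto|]. split; [auto|].
        intros z [U0z U1z] _. apply H1; auto.
      - destruct (Hh0 y Xy) as [U [HU [Uy HU0]]].
        exists U; repeat split; auto. intros z Uz _. unfold F. rewrite (HU0 z Uz), (HU0 y Uy).
        rewrite !Rmult_0_r, Rminus_diag, Rabs_R0; lra. }
    destruct (Hpc F HF) as [M HM].
    pose (fK := fun y => exist (fun r => -M <= r <= M) (F y) (bnd_between _ _ (HM y)) : KTop M).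
    assert (HfK : continuous_on X fK).
    { intros V HV. exists (fun y => V (fK y)); split; [|tauto].
      apply open_local. intros y Vy. destruct (HV (fK y) Vy) as [d [Hd Hd']].
      destruct (HF y Logic.I d Hd) as [U [HU [Uy HUF]]].
      exists U; repeat split; auto. intros z Uz. apply Hd'. simpl. apply HUF; auto. }
    destruct (HSC (KTop M) fK (KTop_compact M) (KTop_hausdorff M) HfK) as [g [Hg Hge]].
    pose (g0 := fun b => proj1_sig (g b)).
    assert (Hg0 : continuous_R g0).
    { intros b _ eps Heps.
      pose (B := fun s : KTop M => Rabs (proj1_sig s - proj1_sig (g b)) < eps).
      assert (HB : open B).
      { intros r Hr. exists (eps - Rabs (proj1_sig r - proj1_sig (g b))); split; [unfold B in Hr; lra|].
        intros s Hs. unfold B in *. revert Hr Hs; split_Rabs; lra. }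
      exists (fun a => B (g a)); split; [apply Hg; exact HB|]. split.
      - unfold B; rewrite Rminus_diag, Rabs_R0; lra.
      - intros y By _. exact By. }
    apply (patch X e c (fun b => W (phi b)) g0 f HHbX Hemb (Hphi W HW) Wc Hg0 Hf).
    intros x Xx Wx. unfold g0. rewrite (Hge x Xx). simpl. unfold F.
    rewrite (Hphij x Xx) in Wx. rewrite HhC; [ring|]. intro H; apply (HWW' (j x)); auto.
Qed.


Theorem lemma2p3 (Y : Top) (X : Y -> Prop) (bX : Top) (e : Y -> bX)
  (Z : Top) (j : Y -> Z) (phi : bX -> Z) :
  tychonoff Y ->
  dense X ->
  compact_set (fun y => ~ X y) ->
  stone_cech_of X bX e ->
  compactification_of (fun _ => True) Z j ->
  continuous phi ->
  (forall x, X x -> phi (e x) = j x) ->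
  (pseudocompact Y <->
   forall b : bX, closure (fun c => ~ hewitt_in X bX e c) b ->
     exists y, ~ X y /\ phi b = j y).
Proof.
  intros HT HD HK HSC HZ Hphi Hphij.
  destruct HZ as [HZc [HZh [HjE HjD]]].
  pose proof (embed_cont j HjE) as Hj.
  split.
  - intros Hpc b Hb. apply NNPP; intro Hn.
    destruct (sep_compact (fun y => ~ X y) j (phi b) HZh Hj HK) as
      [W [W' [HW [HW' [Wb [HW'j Hd]]]]]].
    { intros y Hy E. apply Hn; exists y; auto. }
    destruct (Hb (fun c => W (phi c)) (Hphi W HW) Wb) as [c [Wc Hc]].
    apply Hc. exact (main_hewitt Y X bX e Z j phi HT HK HSC Hj Hphi Hphij Hpc W W' HW HW' Hd HW'j c Wc).
  - intros Hcond f Hf.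
    destruct HSC as [[HbXc [HbXh [Hemb HeD]]] HSC].
    pose (I1 := {q : (bX -> Prop) * R | open (fst q) /\
                   forall x, X x -> fst q (e x) -> Rabs (f x) <= snd q}).
    destruct (HbXc I1 (fun i => fst (proj1_sig i))) as [l1 Hl1].
    + intro i; exact (proj1 (proj2_sig i)).
    + intros b _. destruct (classic (hewitt_in X bX e b)) as [Hh|Hh].
      * destruct (Hh f (cont_weaken _ _ f (fun _ _ => Logic.I) Hf)) as [g [Hg Hge]].
        destruct (Hg b (or_introl eq_refl) 1 Rlt_0_1) as [O [HO [Ob HOb]]].
        assert (Hq : open O /\ forall x, X x -> O (e x) -> Rabs (f x) <= Rabs (g b) + 1).
        { split; auto. intros x Xx Ox.
          assert (H1 := HOb (e x) Ox (or_intror (ex_intro _ x (conj Xx eq_refl)))).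
          rewrite (Hge x Xx) in H1. revert H1; split_Rabs; lra. }
        exists (exist _ (O, Rabs (g b) + 1) Hq); exact Ob.
      * destruct (Hcond b) as [y [Hy Hby]].
        { intros U HU Ub. exists b; auto. }
        destruct (Hf y Logic.I 1 Rlt_0_1) as [O1 [HO1 [O1y HO1f]]].
        destruct HjE as [_ [_ HjE3]].
        destruct (HjE3 O1 HO1) as [V [HV HVj]].
        assert (Hq : open (fun a => V (phi a)) /\
                     forall x, X x -> V (phi (e x)) -> Rabs (f x) <= Rabs (f y) + 1).
        { split; [apply Hphi; exact HV|]. intros x Xx Vx.
          rewrite (Hphij x Xx) in Vx. apply HVj in Vx; [|exact Logic.I].
          specialize (HO1f x Vx Logic.I). revert HO1f; split_Rabs; lra. }
        exists (exist _ ((fun a => V (phi a)), Rabs (f y) + 1) Hq). simpl.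
        rewrite Hby. apply HVj; auto.
    + pose (I2 := {q : (Y -> Prop) * R | open (fst q) /\
                   forall z, fst q z -> Rabs (f z) <= snd q}).
      destruct (HK I2 (fun i => fst (proj1_sig i))) as [l2 Hl2].
      * intro i; exact (proj1 (proj2_sig i)).
      * intros y _. destruct (Hf y Logic.I 1 Rlt_0_1) as [O1 [HO1 [O1y HO1f]]].
        assert (Hq : open O1 /\ forall z, O1 z -> Rabs (f z) <= Rabs (f y) + 1).
        { split; auto. intros z Oz. specialize (HO1f z Oz Logic.I). revert HO1f; split_Rabs; lra. }
        exists (exist _ (O1, Rabs (f y) + 1) Hq); exact O1y.
      * exists (Rmax (fold_right (fun i acc => Rmax (snd (proj1_sig i)) acc) 0 l1)
                     (fold_right (fun i acc => Rmax (snd (proj1_sig i)) acc) 0 l2)).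
        intro y. destruct (classic (X y)) as [Xy|Xy].
        -- destruct (Hl1 (e y) Logic.I) as [i [Hi Hiy]].
           eapply Rle_trans; [apply (proj2 (proj2_sig i) y Xy Hiy)|].
           eapply Rle_trans; [apply (fold_max_ge (fun i => snd (proj1_sig i)) l1 i Hi)| apply Rmax_l].
        -- destruct (Hl2 y Xy) as [i [Hi Hiy]].
           eapply Rle_trans; [apply (proj2 (proj2_sig i) y Hiy)|].
           eapply Rle_trans; [apply (fold_max_ge (fun i => snd (proj1_sig i)) l2 i Hi)| apply Rmax_r].
Qed.
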